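(* Let $E$ be a compact subset of $\mathbb{R}^2$. Then $E$ is purely unrectifiable if and only if $\lim_{\varepsilon \to 0} R_E(\varepsilon,r,M) = 0$ for all $r > 0$ and all $M > 0$.
   Context: A Lipschitz graph in $\mathbb{R}^2$ is a set $\Gamma = \{ x\omega_1 + F(x)\omega_2 : x \in \mathbb{R}\}$ where $\omega_1,\omega_2 \in S^1$ are orthonormal and $F:\mathbb{R}\to\mathbb{R}$ is Lipschitz. A set $E \subset \mathbb{R}^2$ is purely unrectifiable if for all orthonormal $\omega_1,\omega_2 \in S^1$ and all Lipschitz $F:\mathbb{R}\to\mathbb{R}$ one has $m(\{x \in \mathbb{R} : x\omega_1 + F(x)\omega_2 \in E\}) = 0$, where $m$ is Lebesgue measure on $\mathbb{R}$ (equivalently, $E\cap\Gamma$ has zero one-dimensional spherical (or Hausdorff) measure for every Lipschitz graph $\Gamma$). For $\varepsilon, r, M > 0$ the rectifiability constant is $$R_E(\varepsilon,r,M) = \sup \frac{m(\{x \in J : x\omega_1 + (F(x)+y)\omega_2 \in E \text{ for some } -\varepsilon \le y \le \varepsilon\})}{m(J)},$$ the supremum over all orthonormal $\omega_1,\omega_2 \in S^1$, all $F:\mathbb{R}\to\mathbb{R}$ with Lipschitz constant $\sup_{x\ne y}|F(x)-F(y)|/|x-y| \le M$, and all intervals $J \subset \mathbb{R}$ of length at least $r$. *)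

(* Defs.v *)
From HB Require Import structures.
From mathcomp Require Import all_boot all_order all_algebra.
From mathcomp Require Import all_classical all_reals all_analysis.
Set Implicit Arguments. Unset Strict Implicit. Unset Printing Implicit Defensive.
Import Order.TTheory GRing.Theory Num.Theory.
Import numFieldNormedType.Exports.
Local Open Scope classical_set_scope.
Local Open Scope ring_scope.

Section Defs.
Variable R : realType.

Definition orthonormal (w1 w2 : R * R) : Prop :=
  [/\ w1.1 ^+ 2 + w1.2 ^+ 2 = 1, w2.1 ^+ 2 + w2.2 ^+ 2 = 1
    & w1.1 * w2.1 + w1.2 * w2.2 = 0].

Definition graph_pt (w1 w2 : R * R) (F : R -> R) (x y : R) : R * R :=
  (x * w1.1 + (F x + y) * w2.1, x * w1.2 + (F x + y) * w2.2).

Definition lipschitz_with (F : R -> R) (M : R) : Prop :=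
  forall x y : R, `|F x - F y| <= M * `|x - y|.

Definition purely_unrectifiable (E : set (R * R)) : Prop :=
  forall (w1 w2 : R * R) (F : R -> R),
    orthonormal w1 w2 -> (exists L : R, lipschitz_with F L) ->
    (@lebesgue_measure R) [set x : R | E (graph_pt w1 w2 F x 0)] = 0%E.

Definition rect_const (E : set (R * R)) (eps r M : R) : \bar R :=
  ereal_sup [set z : \bar R | exists (w1 w2 : R * R) (F : R -> R) (a b : R),
    [/\ orthonormal w1 w2, lipschitz_with F M, r <= b - a &
      z = ((@lebesgue_measure R)
             [set x : R | (a <= x <= b)%R /\
                exists y : R, (-eps <= y <= eps)%R /\ E (graph_pt w1 w2 F x y)]
           * ((b - a)^-1)%:E)%E]].
End Defs.

(* Main.v *)
From Pilot Require Import Defs.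
From HB Require Import structures.
From mathcomp Require Import all_boot all_order all_algebra.
From mathcomp Require Import all_classical all_reals all_analysis.
From mathcomp Require Import ring lra.
From mathcomp Require Import measurable_realfun.
Import Order.TTheory GRing.Theory Num.Theory.
Import numFieldNormedType.Exports.
Local Open Scope classical_set_scope.
Local Open Scope ring_scope.
Local Notation orthonormal := Pilot.Defs.orthonormal.
Set Implicit Arguments. Unset Strict Implicit.
Section Aux.
Variable R : realType.

Lemma unit_le (u v : R) : u ^+ 2 + v ^+ 2 = 1 -> `|u| <= 1.
Proof. move=> h; rewrite ler_norml; apply/andP; split; nra. Qed.

Lemma ortho_bounds (w1 w2 : R * R) : orthonormal w1 w2 ->
  [/\ `|w1.1| <= 1, `|w1.2| <= 1, `|w2.1| <= 1 & `|w2.2| <= 1].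
Proof.
case=> h1 h2 _; split; first exact: (@unit_le _ _ h1).
- by apply: (@unit_le _ w1.1); rewrite addrC.
- exact: (@unit_le _ _ h2).
- by apply: (@unit_le _ w2.1); rewrite addrC.
Qed.

Lemma graph_proj (w1 w2 : R * R) F x y : orthonormal w1 w2 ->
  (graph_pt w1 w2 F x y).1 * w1.1 + (graph_pt w1 w2 F x y).2 * w1.2 = x /\
  (graph_pt w1 w2 F x y).1 * w2.1 + (graph_pt w1 w2 F x y).2 * w2.2 = F x + y.
Proof.
case=> h1 h2 h3; rewrite /graph_pt /=; split.
  have -> : (x * w1.1 + (F x + y) * w2.1) * w1.1 + (x * w1.2 + (F x + y) * w2.2) * w1.2
    = x * (w1.1 ^+ 2 + w1.2 ^+ 2) + (F x + y) * (w1.1 * w2.1 + w1.2 * w2.2) by ring.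
  by rewrite h1 h3; ring.
have -> : (x * w1.1 + (F x + y) * w2.1) * w2.1 + (x * w1.2 + (F x + y) * w2.2) * w2.2
    = (F x + y) * (w2.1 ^+ 2 + w2.2 ^+ 2) + x * (w1.1 * w2.1 + w1.2 * w2.2) by ring.
by rewrite h2 h3; ring.
Qed.

Lemma lin_bound (a b u v B : R) : `|a| <= B -> `|b| <= B -> `|u| <= 1 -> `|v| <= 1 ->
  `|a * u + b * v| <= B + B.
Proof.
move=> ha hb hu hv; apply: (le_trans (ler_normD _ _)); rewrite !normrM.
apply: lerD.
  by rewrite -[B]mulr1; apply: ler_pM.
by rewrite -[B]mulr1; apply: ler_pM.
Qed.

Lemma graph_x_bound (w1 w2 : R * R) F x y B : orthonormal w1 w2 ->
  `|(graph_pt w1 w2 F x y).1| <= B -> `|(graph_pt w1 w2 F x y).2| <= B ->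
  `|x| <= B + B /\ `|F x + y| <= B + B.
Proof.
move=> ho h1 h2; have [p1 p2] := @graph_proj w1 w2 F x y ho.
have [b1 b2 b3 b4] := @ortho_bounds w1 w2 ho.
by split; [rewrite -p1|rewrite -p2]; apply: lin_bound.
Qed.

Lemma lebmono (A B : set R) : A `<=` B -> (@lebesgue_measure R A <= lebesgue_measure B)%E.
Proof.
move=> AB; rewrite /lebesgue_measure /lebesgue_stieltjes_measure /measure_extension.
exact: le_outer_measure.
Qed.

Lemma ulim_ex (U : set_system nat) : UltraFilter U ->
  forall (s : nat -> R) (K : R), (forall n, `|s n| <= K) -> exists l : R, s @ U --> l.
Proof.
move=> UU s K hK.
have cK := @segment_compact R (- K) K (s @ U) _.
have /cK [l [_ cl]] : (s @ U) `[- K, K]%classic.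
  rewrite /fmap /=; apply: filterS (@filterT _ U _) => n _ /=.
  by rewrite in_itv /= -ler_norml.
exists l => V Vl /=.
have [//|nV] := in_ultra_setVsetC (s @^-1` V) UU.
have : (s @ U) (~` V) by [].
move=> /cl /(_ Vl) [z [zV zV']]; by [].
Qed.

End Aux.

Set Implicit Arguments. Unset Strict Implicit.
Section Aux2.
Variable R : realType.

Lemma compact_bound (E : set (R * R)) : compact E ->
  exists B : R, 0 < B /\ forall p, E p -> `|p.1| <= B /\ `|p.2| <= B.
Proof.
move=> /compact_bounded [M0 [_ hM0]].
exists (Num.max (M0 + 1) 1); split; first by rewrite lt_max ltr01 orbT.
move=> p Ep.
have : `|p| <= Num.max (M0 + 1) 1.
  apply: (hM0 (Num.max (M0 + 1) 1)) => //.
  by rewrite lt_max ltrDl ltr01.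
by rewrite prod_normE ge_max => /andP[-> ->].
Qed.


Lemma backward (E : set (R * R)) : compact E ->
  (forall r M : R, 0 < r -> 0 < M ->
      rect_const E e r M @[e --> 0^'+] --> 0%E) -> purely_unrectifiable E.
Proof.
move=> cE H w1 w2 F ho [L hL].
have [B [B0 hB]] := compact_bound cE.
set T := [set x | E (graph_pt w1 w2 F x 0)].
have Tsub : T `<=` `[-(B+B), B+B]%classic.
  move=> x /hB [h1 h2]; have [hx _] := graph_x_bound ho h1 h2.
  by rewrite /= in_itv /= -ler_norml.
apply: contrapT => hT.
have Tpos : (0 < lebesgue_measure T)%E by rewrite lt0e measure_ge0 andbT; apply/eqP.
have Tfin : (lebesgue_measure T <= ((B + B) - - (B + B))%:E)%E.
  apply: le_trans (lebmono Tsub) _.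
  by rewrite lebesgue_measure_itv /= lte_fin ltrNl ?opprK gtrN ?addr_gt0 // EFinB.
have Tfn : lebesgue_measure T \is a fin_num.
  by rewrite ge0_fin_numE ?measure_ge0 // (le_lt_trans Tfin) // ltry.
set m := fine (lebesgue_measure T).
have mE : lebesgue_measure T = m%:E by rewrite fineK.
have m0 : 0 < m by rewrite -lte_fin -mE.
set r := (B + B) - - (B + B).
have r0 : 0 < r by rewrite /r opprK addr_gt0 // addr_gt0.
set M := Num.max L 1.
have M0 : 0 < M by rewrite lt_max ltr01 orbT.
have lipM : lipschitz_with F M.
  move=> x y; apply: le_trans (hL x y) _; apply: ler_wpM2r => //.
  by rewrite le_max lexx.
have key : forall e : R, 0 < e -> ((m / r)%:E <= rect_const E e r M)%E.
  move=> e e0; apply: le_ereal_sup_tmp.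
  eexists.
    exists w1, w2, F, (- (B + B)), (B + B); split => //; reflexivity.
  rewrite EFinM; apply: lee_wpmul2r; first by rewrite lee_fin invr_ge0 ltW.
  rewrite -mE; apply: lebmono => x Tx; split.
    by have := Tsub x Tx; rewrite /= in_itv.
  by exists 0; split => //; rewrite oppr_le0 ltW.
have := H r M r0 M0 => hc.
have : ((m / r)%:E <= lim (rect_const E e r M @[e --> 0^'+]))%E.
  apply: lime_ge; first by apply/cvg_ex; exists 0%E.
  near=> e; apply: key; near: e; exact: nbhs_right_gt.
rewrite (cvg_lim _ hc) // lee_fin => h.
by have := divr_gt0 m0 r0; rewrite ltNge h.
Unshelve. all: by end_near.
Qed.


Definition Sset (w1 w2 : R * R) (F : R -> R) (E : set (R * R)) (n : nat) :=
  [set x : R | exists y : R, `|y| <= n.+1%:R^-1 /\ E (graph_pt w1 w2 F x y)].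

End Aux2.

Set Implicit Arguments. Unset Strict Implicit.
Section Aux3.
Variable R : realType.

Lemma grid_cover (a h : R) (N : nat) : 0 < h -> forall x, a <= x <= a + N%:R * h ->
  exists i : nat, (i <= N)%N /\ `|x - (a + i%:R * h)| <= h.
Proof.
move=> h0; elim: N => [|N IH] x /andP[h1 h2].
  exists 0%N; split => //; rewrite mul0r addr0 in h2 *.
  have -> : x = a by apply/eqP; rewrite eq_le h1 h2.
  by rewrite subrr normr0 ltW.
have [hx|hx] := leP x (a + N%:R * h).
  have [i [iN hi]] := IH x (introT andP (conj h1 hx)).
  by exists i; split => //; apply: leq_trans iN _.
exists N.+1; split => //.
rewrite -addn1 natrD in h2 *; rewrite distrC ger0_norm; lra.
Qed.

Lemma unif_close (U : set_system nat) (UU : ProperFilter U)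
  (F : nat -> R -> R) (G : R -> R) (M X d : R) : 0 < M -> 0 < d ->
  (forall n, lipschitz_with (F n) M) -> lipschitz_with G M ->
  (forall x, (fun n => F n x) @ U --> G x) ->
  \forall n \near U, forall x, `|x| <= X -> `|G x - F n x| <= d.
Proof.
move=> M0 d0 hF hG hc.
have [X0|X0] := ltP X 0.
  apply: nearW => n x hx; have := le_lt_trans (normr_ge0 x) (le_lt_trans hx X0).
  by rewrite ltxx.
set h := d / (4 * M).
have h0 : 0 < h by rewrite divr_gt0 // mulr_gt0.
have hM : M * h + M * h = d / 2.
  by rewrite /h; field; rewrite gt_eqF.
set N := Num.Def.archi_bound ((X + X) / h).
have NX : X + X <= N%:R * h.
  rewrite -ler_pdivrMr //; apply: ltW; apply: archi_boundP.
  by apply: divr_ge0; [exact: addr_ge0|exact: ltW].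
set g := fun i : 'I_N.+1 => - X + (i : nat)%:R * h.
have : \forall n \near U, forall i : 'I_N.+1, `|G (g i) - F n (g i)| <= d / 2.
  apply: filter_forall => i.
  by have /cvgrPdist_le := hc (g i); apply; rewrite divr_gt0.
apply: filterS => n hn x hx.
have [i [iN hi]] : exists i : nat, (i <= N)%N /\ `|x - (- X + i%:R * h)| <= h.
  apply: grid_cover => //; move: (hx); rewrite ler_norml => /andP[a1 a2].
  apply/andP; split => //; lra.
have := hn (Ordinal (n := N.+1) (m := i) iN).
rewrite /g /= => hgi.
have e1 := hG x (- X + i%:R * h).
have e2 := hF n (- X + i%:R * h) x.
rewrite (distrC x) in hi.
set gi := - X + i%:R * h in hgi e1 e2 hi *.
have t1 : `|G x - F n x| <= `|G x - G gi| + `|G gi - F n x|.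
  have -> : G x - F n x = (G x - G gi) + (G gi - F n x) by ring.
  exact: ler_normD.
have t2 : `|G gi - F n x| <= `|G gi - F n gi| + `|F n gi - F n x|.
  have -> : G gi - F n x = (G gi - F n gi) + (F n gi - F n x) by ring.
  exact: ler_normD.

have e1' : `|G x - G gi| <= M * h.
  by apply: le_trans e1 _; rewrite ler_pM2l // distrC.
have e2' : `|F n gi - F n x| <= M * h.
  by apply: le_trans e2 _; rewrite ler_pM2l.
lra.
Qed.


Lemma ulim_le (U : set_system nat) {UU : ProperFilter U} (s : nat -> R) (a b : R) :
  s @ U --> a -> (forall n, s n <= b) -> a <= b.
Proof.
move=> h hb.
apply: (closed_cvg [set z : R | z <= b] _ _ _ h).
- exact: closed_le.
- exact: nearW.
Qed.

Lemma ulim_ge (U : set_system nat) {UU : ProperFilter U} (s : nat -> R) (a b : R) :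
  s @ U --> a -> (forall n, b <= s n) -> b <= a.
Proof.
move=> h hb.
apply: (closed_cvg [set z : R | b <= z] _ _ _ h).
- exact: closed_ge.
- exact: nearW.
Qed.

Lemma ulim_eq (U : set_system nat) {UU : ProperFilter U} (s : nat -> R) (a b : R) :
  s @ U --> a -> (forall n, s n = b) -> a = b.
Proof.
move=> h hb; apply/eqP; rewrite eq_le (ulim_le h) ?(ulim_ge h) // => n; by rewrite hb.
Qed.


Lemma small_inv (e : R) : 0 < e -> exists k : nat, k.+1%:R^-1 < e.
Proof.
move=> e0; exists (Num.Def.archi_bound e^-1).
rewrite invf_plt ?posrE // ?ltr0Sn //.
apply: lt_le_trans (archi_boundP _) _; first by rewrite invr_ge0 ltW.
by rewrite ler_nat.
Qed.

Lemma inv_mono (n m : nat) : (n <= m)%N -> m.+1%:R^-1 <= n.+1%:R^-1 :> R.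
Proof. by move=> nm; rewrite lef_pV2 ?posrE ?ltr0Sn // ler_nat ltnS. Qed.

Lemma diff_bound (x W1 a Gx W2 b Fx y d X K : R) :
  `|x| <= X -> `|W1 - a| <= d -> `|Gx| <= K -> `|W2 - b| <= d ->
  `|Gx - Fx| <= d -> `|b| <= 1 -> `|y| <= d -> 0 <= d ->
  `|(x * W1 + (Gx + 0) * W2) - (x * a + (Fx + y) * b)| <= (X + K + 2) * d.
Proof.
move=> hx h1 hG h2 h3 hb hy d0.
have -> : (x * W1 + (Gx + 0) * W2) - (x * a + (Fx + y) * b) =
  x * (W1 - a) + Gx * (W2 - b) + ((Gx - Fx) * b + (- y) * b) by ring.
have t1 : `|x * (W1 - a)| <= X * d.
  by rewrite normrM; apply: ler_pM.
have t2 : `|Gx * (W2 - b)| <= K * d.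
  by rewrite normrM; apply: ler_pM.
have t3 : `|(Gx - Fx) * b| <= d.
  by rewrite normrM -[d]mulr1; apply: ler_pM.
have t4 : `|(- y) * b| <= d.
  by rewrite normrM normrN -[d]mulr1; apply: ler_pM.
have s1 := ler_normD (x * (W1 - a) + Gx * (W2 - b)) ((Gx - Fx) * b + (- y) * b).
have s2 := ler_normD (x * (W1 - a)) (Gx * (W2 - b)).
have s3 := ler_normD ((Gx - Fx) * b) ((- y) * b).
have -> : (X + K + 2) * d = X * d + K * d + d + d by ring.
lra.
Qed.

End Aux3.

Set Implicit Arguments. Unset Strict Implicit.
Section Aux4.
Variable R : realType.

Lemma lin_close (x x' u v Gx Gx' M : R) : `|u| <= 1 -> `|v| <= 1 ->
  `|Gx - Gx'| <= M * `|x - x'| -> 0 <= M ->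
  `|(x * u + (Gx + 0) * v) - (x' * u + (Gx' + 0) * v)| <= (1 + M) * `|x - x'|.
Proof.
move=> hu hv hG M0.
have -> : (x * u + (Gx + 0) * v) - (x' * u + (Gx' + 0) * v) =
  (x - x') * u + (Gx - Gx') * v by ring.
apply: le_trans (ler_normD _ _) _; rewrite !normrM mulrDl mul1r.
apply: lerD; first by rewrite -[X in _ <= X]mulr1; apply: ler_pM.
by rewrite -[X in _ <= X]mulr1; apply: ler_pM.
Qed.

Lemma forward_key2 (E : set (R * R)) (M kap : R) (w1 w2 : nat -> R * R)
  (F : nat -> R -> R) : compact E -> purely_unrectifiable E -> 0 < M -> 0 < kap ->
  (forall n, orthonormal (w1 n) (w2 n)) -> (forall n, lipschitz_with (F n) M) ->
  (forall n, (kap%:E < lebesgue_measure (Sset (w1 n) (w2 n) (F n) E n))%E) -> False.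
Proof.
move=> cE PU M0 kap0 ho hl hS.
have [B [B0 hB]] := compact_bound cE.
have clE : closed E := compact_closed (@norm_hausdorff _ _) cE.
have inv1 : forall n : nat, n.+1%:R^-1 <= 1 :> R.
  by move=> n; rewrite invf_le1 ?ltr0Sn // ler1n.
have Sprop : forall n x, Sset (w1 n) (w2 n) (F n) E n x ->
    `|x| <= B + B /\ `|F n x| <= B + B + 1.
  move=> n x [y [hy Ey]]; have [h1 h2] := hB _ Ey.
  have [hx hxy] := graph_x_bound (ho n) h1 h2.
  split => //.
  have y1 : `|y| <= 1 := le_trans hy (inv1 n).
  have -> : F n x = (F n x + y) - y by ring.
  by apply: le_trans (ler_normB _ _) _; apply: lerD.
have K0 : forall n, `|F n 0| <= B + B + 1 + M * (B + B).
  move=> n; have [x0 Sx0] : exists x0, Sset (w1 n) (w2 n) (F n) E n x0.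
    apply: contrapT => hne.
    have h0 : Sset (w1 n) (w2 n) (F n) E n = set0.
      by apply/seteqP; split => // x Sx; apply: hne; exists x.
    by have := hS n; rewrite h0 measure0 lte_fin ltNge ltW.
  have [hx hF] := Sprop n x0 Sx0.
  have hl0 := hl n 0 x0; rewrite sub0r normrN in hl0.
  have -> : F n 0 = F n x0 + (F n 0 - F n x0) by ring.
  apply: le_trans (ler_normD _ _) _; apply: lerD => //.
  by apply: le_trans hl0 _; rewrite ler_pM2l.
have Fbound : forall n x, `|F n x| <= B + B + 1 + M * (B + B) + M * `|x|.
  move=> n x; have hlx := hl n x 0; rewrite subr0 in hlx.
  have -> : F n x = F n 0 + (F n x - F n 0) by ring.
  by apply: le_trans (ler_normD _ _) _; apply: lerD.
have [U [UU Uoo]] := @ultraFilterLemma nat \oo _.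
have UP : ProperFilter U by exact: ultra_proper.
have wb := fun n => ortho_bounds (ho n).
have [W11 h11] := @ulim_ex R U UU (fun n => (w1 n).1) 1 (fun n => let: And4 a _ _ _ := wb n in a).
have [W12 h12] := @ulim_ex R U UU (fun n => (w1 n).2) 1 (fun n => let: And4 _ a _ _ := wb n in a).
have [W21 h21] := @ulim_ex R U UU (fun n => (w2 n).1) 1 (fun n => let: And4 _ _ a _ := wb n in a).
have [W22 h22] := @ulim_ex R U UU (fun n => (w2 n).2) 1 (fun n => let: And4 _ _ _ a := wb n in a).
have [G hG] : {G : R -> R & forall x, (fun n => F n x) @ U --> G x}.
  apply: (@choice R R (fun x l => (fun n => F n x) @ U --> l)) => x.
  exact: (@ulim_ex R U UU (fun n => F n x) _ (fun n => Fbound n x)).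
have hoW : orthonormal (W11, W12) (W21, W22).
  split => /=.
  - apply: (ulim_eq (cvgD (cvgM h11 h11) (cvgM h12 h12))) => n /=.
    by case: (ho n) => <- _ _; rewrite !expr2.
  - apply: (ulim_eq (cvgD (cvgM h21 h21) (cvgM h22 h22))) => n /=.
    by case: (ho n) => _ <- _; rewrite !expr2.
  - rewrite -(ulim_eq (cvgD (cvgM h11 h21) (cvgM h12 h22)) (b := 0)) //.
    by move=> n; case: (ho n) => _ _ <-.
have hlG : lipschitz_with G M.
  move=> x y; rewrite ler_norml; apply/andP; split.
  - apply: (ulim_ge (cvgB (hG x) (hG y))) => n /=.
    by have := hl n x y; rewrite ler_norml => /andP[].
  - apply: (ulim_le (cvgB (hG x) (hG y))) => n /=.
    by have := hl n x y; rewrite ler_norml => /andP[].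
have T0 := PU (W11, W12) (W21, W22) G hoW (ex_intro _ M hlG).
have [bW11 bW12 bW21 bW22] := ortho_bounds hoW.
set gF := fun x => graph_pt (W11, W12) (W21, W22) G x 0.
set A := fun j : nat => [set x : R | `|x| <= B + B /\ exists p, E p /\
   `|(gF x).1 - p.1| <= j.+1%:R^-1 /\ `|(gF x).2 - p.2| <= j.+1%:R^-1].
set N := fun j : nat => `[- (B + B), B + B]%classic `&` closure (A j).
have GK : forall x, `|x| <= B + B -> `|G x| <= `|G 0| + M * (B + B).
  move=> x hx; have h := hlG x 0; rewrite subr0 in h.
  have -> : G x = G 0 + (G x - G 0) by ring.
  apply: le_trans (ler_normD _ _) _; rewrite lerD2l.
  by apply: le_trans h _; rewrite ler_pM2l.
have C1 : forall j, (kap%:E < lebesgue_measure (N j))%E.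
  move=> j.
  set eta := j.+1%:R^-1 : R.
  set KG := `|G 0| + M * (B + B).
  have KG0 : 0 <= KG.
    apply: addr_ge0; [exact: normr_ge0|apply: mulr_ge0; apply: ltW => //].
    exact: addr_gt0.
  have C0 : 0 < B + B + KG + 2.
    lra.
  set d := eta / (B + B + KG + 2).
  have d0 : 0 < d by rewrite divr_gt0 // invr_gt0 ltr0Sn.
  have de : (B + B + KG + 2) * d = eta.
    by rewrite /d mulrC -mulrA mulVf ?mulr1 // gt_eqF.
  have hu := @unif_close R U UP F G M (B + B) d M0 d0 hl hlG hG.
  have /cvgrPdist_le /(_ d d0) a1 := h11.
  have /cvgrPdist_le /(_ d d0) a2 := h12.
  have /cvgrPdist_le /(_ d d0) a3 := h21.
  have /cvgrPdist_le /(_ d d0) a4 := h22.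
  have hn : \forall n \near U, n.+1%:R^-1 <= d.
    have [N0 hN0] := small_inv d0.
    apply: Uoo; exists N0 => // n /= nN.
    apply: le_trans (ltW hN0); exact: inv_mono.
  have [n [hu1 [c1 [c2 [c3 [c4 c5]]]]]] :=
    filter_ex (filterI hu (filterI a1 (filterI a2 (filterI a3 (filterI a4 hn))))).
  have SA : Sset (w1 n) (w2 n) (F n) E n `<=` A j.
    move=> x Sx; have [hx _] := Sprop n x Sx.
    case: Sx => y [hy Ey].
    split => //; exists (graph_pt (w1 n) (w2 n) (F n) x y); split => //.
    have [_ _ bw1 bw2] := wb n.
    have hy' : `|y| <= d := le_trans hy c5.
    split; rewrite -/eta -de; apply: diff_bound => //;
      [exact: GK x hx|exact: hu1 x hx|exact: ltW|exact: GK x hx|exact: hu1 x hx|exact: ltW].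
  apply: lt_le_trans (hS n) (lebmono _).
  move=> x /SA Ax; split; last exact: subset_closure.
  by case: Ax => hx _; rewrite /= in_itv /= -ler_norml.
have C2 : \bigcap_j N j `<=` [set x | E (graph_pt (W11, W12) (W21, W22) G x 0)].
  move=> x hx; apply: clE => V /nbhs_ballP [eps /= eps0 hV].
  have e2 : 0 < eps / 2 by rewrite divr_gt0.
  have [j hj] := small_inv e2.
  have M1 : 0 < 1 + M by rewrite addr_gt0.
  set rho := eps / 2 / (1 + M).
  have rho0 : 0 < rho by rewrite divr_gt0 // divr_gt0.
  have [_ cl] := hx j I.
  have [x' [Ax' bx']] := cl (ball x rho) (nbhsx_ballx x rho rho0).
  case: Ax' => hx' [p [Ep [p1 p2]]].
  exists p; split => //; apply: hV.
  have hxx : `|x - x'| < rho by [].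
  have hrho : (1 + M) * rho = eps / 2.
    by rewrite /rho; field; rewrite gt_eqF.
  have L1 := lin_close bW11 bW21 (hlG x x') (ltW M0).
  have L2 := lin_close bW12 bW22 (hlG x x') (ltW M0).
  simpl in L1, L2.
  have hm : (1 + M) * `|x - x'| <= eps / 2.
    by rewrite -hrho; apply: ler_pM => //; [exact: ltW|exact: ltW].
  split; rewrite /ball /=.
  - have t := ler_normD ((x * W11 + (G x + 0) * W21) - (x' * W11 + (G x' + 0) * W21))
      ((x' * W11 + (G x' + 0) * W21) - p.1).
    have -> : x * W11 + (G x + 0) * W21 - p.1 =
      ((x * W11 + (G x + 0) * W21) - (x' * W11 + (G x' + 0) * W21)) +
      ((x' * W11 + (G x' + 0) * W21) - p.1) by ring.
    apply: le_lt_trans t _.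
    have hp : `|(x' * W11 + (G x' + 0) * W21) - p.1| <= j.+1%:R^-1 by exact: p1.
    rewrite [X in _ < X](splitr eps); apply: ler_ltD; first exact: le_trans L1 hm.
    exact: le_lt_trans hp hj.
  - have t := ler_normD ((x * W12 + (G x + 0) * W22) - (x' * W12 + (G x' + 0) * W22))
      ((x' * W12 + (G x' + 0) * W22) - p.2).
    have -> : x * W12 + (G x + 0) * W22 - p.2 =
      ((x * W12 + (G x + 0) * W22) - (x' * W12 + (G x' + 0) * W22)) +
      ((x' * W12 + (G x' + 0) * W22) - p.2) by ring.
    apply: le_lt_trans t _.
    have hp : `|(x' * W12 + (G x' + 0) * W22) - p.2| <= j.+1%:R^-1 by exact: p2.
    rewrite [X in _ < X](splitr eps); apply: ler_ltD; first exact: le_trans L2 hm.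
    exact: le_lt_trans hp hj.
have mN : forall j, measurable (N j).
  move=> j; apply: measurableI; first exact: measurable_itv.
  apply: closed_measurable; exact: closed_closure.
have niN : nonincreasing_seq N.
  move=> i j ij; apply/subsetPset => x [h1 h2]; split => //.
  apply: (closure_subset _ h2) => y [hy [p [Ep [q1 q2]]]]; split => //.
  exists p; split => //.
  split; [apply: (le_trans q1)|apply: (le_trans q2)]; exact: inv_mono.
have fin0 : (lebesgue_measure (N 0%N) < +oo)%E.
  apply: le_lt_trans (lebmono (@subIsetl _ _ _)) _.
  by rewrite lebesgue_measure_itv; case: ifP => _; rewrite ?ltry.
have cv := nonincreasing_cvg_mu fin0 mN (bigcapT_measurable mN) niN.
have hk : (kap%:E <= lebesgue_measure (\bigcap_j N j))%E.
  rewrite -(cvg_lim _ cv) //; apply: lime_ge; first by apply/cvg_ex; eexists; exact: cv.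
  by apply: nearW => j; exact: ltW (C1 j).
have := le_trans hk (lebmono C2); rewrite T0 lee_fin.
by rewrite leNgt kap0.
Qed.

End Aux4.

Section Aux5.
Variable R : realType.
Lemma forward (E : set (R * R)) : compact E -> purely_unrectifiable E ->
  (forall r M : R, 0 < r -> 0 < M ->
      rect_const E e r M @[e --> 0^'+] --> 0%E).
Proof.
move=> cE PU r M r0 M0.
have ge0 : forall e, (0 <= rect_const E e r M)%E.
  move=> e; apply: le_ereal_sup_tmp; eexists.
    exists (1, 0), (0, 1), (fun=> 0), 0, r; split => //.
    - by split => /=; ring.
    - by move=> x y; rewrite subrr normr0 mulr_ge0 // ltW.
    - by rewrite subr0.
  by apply: mule_ge0 => //; rewrite lee_fin invr_ge0 subr0 ltW.
have small : forall c, 0 < c -> exists2 d, 0 < d &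
    forall e, 0 < e -> e < d -> (rect_const E e r M <= c%:E)%E.
  move=> c c0; apply: contrapT => hn.
  have hn' : forall n : nat, exists t : (R * R) * (R * R) * (R -> R),
      [/\ orthonormal t.1.1 t.1.2, lipschitz_with t.2 M &
        ((c * r)%:E < lebesgue_measure (Sset t.1.1 t.1.2 t.2 E n))%E].
    move=> n.
    have [e [e0 en ce]] : exists e, [/\ 0 < e, e < n.+1%:R^-1 &
        (c%:E < rect_const E e r M)%E].
      apply: contrapT => hnt; apply: hn; exists n.+1%:R^-1 => // e e0 ed.
      rewrite leNgt; apply/negP => hlt; apply: hnt; by exists e.
    have [z [w1 [w2 [G [a [b [ho hl hr ->]]]]]] cz] := ereal_sup_gt ce.
    exists (w1, w2, G); split => //=.
    set S := [set x : R | _ /\ _] in cz.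
    have ab : 0 < b - a by apply: lt_le_trans hr.
    have Sab : (lebesgue_measure S <= (b - a)%:E)%E.
      apply: le_trans (lebmono (B := `[a, b]%classic) _) _.
        by move=> x [h _]; rewrite /= in_itv.
      by rewrite lebesgue_measure_itv /= lte_fin -subr_gt0 ab EFinB.
    have Sfn : lebesgue_measure S \is a fin_num.
      by rewrite ge0_fin_numE ?measure_ge0 // (le_lt_trans Sab) // ltry.
    rewrite -(fineK Sfn) -EFinM lte_fin in cz.
    have hS : ((c * r)%:E < lebesgue_measure S)%E.
      rewrite -(fineK Sfn) lte_fin.
      apply: (le_lt_trans (y := c * (b - a))); first by rewrite ler_pM2l.
      by rewrite -ltr_pdivlMr.
    apply: (lt_le_trans hS (lebmono _)).
    move=> x [_ [y [hy Ey]]]; exists y; split => //.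
    case/andP: hy => h1 h2; rewrite ler_norml; apply/andP; split.
      by apply: le_trans h1; rewrite lerN2 ltW.
    exact: le_trans h2 (ltW en).
  have [g hg] := choice hn'.
  apply: (@forward_key2 R E M (c * r) (fun n => (g n).1.1) (fun n => (g n).1.2)
    (fun n => (g n).2) cE PU M0 (mulr_gt0 c0 r0)).
  - by move=> n; case: (hg n).
  - by move=> n; case: (hg n).
  - by move=> n; case: (hg n).
have [d1 d10 hd1] := small 1 ltr01.
apply/fine_cvgP; split.
  near=> e; rewrite ge0_fin_numE ?ge0 //.
  apply: le_lt_trans (hd1 e _ _) _; last exact: ltry.
    by near: e; exact: nbhs_right_gt.
  by near: e; exact: nbhs_right_lt.
apply/cvgrPdist_le => c c0.
have [d d0 hd] := small c c0.
near=> e.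
have h0 := ge0 e.
have hc : (rect_const E e r M <= c%:E)%E.
  apply: hd; near: e; [exact: nbhs_right_gt|exact: nbhs_right_lt].
have fn : rect_const E e r M \is a fin_num.
  by rewrite ge0_fin_numE // (le_lt_trans hc) // ltry.
rewrite /= sub0r normrN ger0_norm.
  by rewrite -lee_fin fineK.
by rewrite -lee_fin fineK.
Unshelve. all: by end_near.
Qed.

End Aux5.

Unset Implicit Arguments.

Theorem proposition1p9 (R : realType) (E : set (R * R)) :
  compact E ->
  (purely_unrectifiable E <->
   (forall r M : R, 0 < r -> 0 < M ->
      rect_const E e r M @[e --> 0^'+] --> 0%E)).
Proof.
move=> cE; split; [exact: forward|exact: backward].
Qed.
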